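(* Let $Y_1,Y_2\subsetneq\mathbb{C}$ be conformally equivalent domains and $\Omega\subset\mathbb{C}$ an arbitrary domain. Then there exist $a\in Y_1$ and $b\in Y_2$ such that $\mathscr{C}_{\Omega}^{Y_1,a}(w)=\mathscr{C}_{\Omega}^{Y_2,b}(w)$ for every $w\in\Omega$.
   Context: $\mathbb{D}=\{z\in\mathbb{C}:|z|<1\}$. For domains $\Omega\subset\mathbb{C}$, $Y\subsetneq\mathbb{C}$, and points $w\in\Omega$, $s\in Y$, let $\mathcal{H}^s_w(\Omega,Y)$ be the set of holomorphic maps $h:\Omega\to Y$ with $h(w)=s$ and $h(z)\neq s$ for all $z\in\Omega\setminus\{w\}$. For a domain $Y\subsetneq\mathbb{C}$ and $v\in Y$, the Hurwitz density is $\eta_Y(v)=2/r_Y(v)$, where $r_Y(v)=\max\{h'(0): h:\mathbb{D}\to Y \text{ holomorphic},\ h(0)=v,\ h(z)\neq v \text{ for } z\in\mathbb{D}\setminus\{0\},\ h'(0)>0\}$. The Carathéodory density of the Hurwitz metric of $\Omega$ relative to $Y$ is $\mathscr{C}_{\Omega}^{Y,s}(w)=\sup\{\eta_Y(h(w))|h'(w)| : h\in\mathcal{H}^s_w(\Omega,Y)\}$, defined to be $0$ if $\mathcal{H}^s_w(\Omega,Y)=\emptyset$. *)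

(* Defs.v *)
(* mathcomp-analysis, complex plane = R[i] (R : realType),
   viewed as a normed module over itself via the regular structure ^o. *)
From HB Require Import structures.
From mathcomp Require Import all_boot all_order all_algebra.
From mathcomp Require Import all_classical all_reals all_analysis.
From mathcomp Require Import complex.
Import Order.TTheory GRing.Theory Num.Theory.
Import numFieldNormedType.Exports.

Set Implicit Arguments.
Unset Strict Implicit.
Unset Printing Implicit Defensive.

Local Open Scope classical_set_scope.
Local Open Scope ring_scope.
Local Open Scope complex_scope.

Notation Cplx R := ((R[i])^o) (only parsing).

Definition domain (R : realType) (A : set (Cplx R)) : Prop :=
  open A /\ connected A /\ A !=set0.

Definition holo_on (R : realType) (f : Cplx R -> Cplx R) (A : set (Cplx R)) : Prop :=
  forall z, A z -> derivable f z 1.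

Definition hol_map (R : realType) (Om Y : set (Cplx R)) (f : Cplx R -> Cplx R) : Prop :=
  holo_on f Om /\ (forall z, Om z -> Y (f z)).

Definition Hclass (R : realType) (Om Y : set (Cplx R)) (w s : Cplx R)
    (h : Cplx R -> Cplx R) : Prop :=
  hol_map Om Y h /\ h w = s /\ (forall z, Om z -> z <> w -> h z <> s).

Definition unit_disc (R : realType) : set (Cplx R) := [set z | `|z| < 1].

(* r_Y(v) = max { h'(0) : h in H^v_0(D, Y), h'(0) > 0 }  (taken as a sup). *)
Definition hurwitz_r (R : realType) (Y : set (Cplx R)) (v : Cplx R) : R :=
  sup [set x : R | 0 < x /\
        exists h, Hclass (@unit_disc R) Y 0 v h /\ 'D_1 h 0 = (x%:C : Cplx R)].

Definition hurwitz_eta (R : realType) (Y : set (Cplx R)) (v : Cplx R) : R :=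
  2 / hurwitz_r Y v.

Definition cara_density (R : realType) (Om Y : set (Cplx R)) (s w : Cplx R) : \bar R :=
  if `[< exists h, Hclass Om Y w s h >] then
    ereal_sup [set ((hurwitz_eta Y (h w)) * Normc.normc ('D_1 h w))%:E
              | h in [set h | Hclass Om Y w s h]]
  else 0%E.

Definition conf_equiv (R : realType) (Y1 Y2 : set (Cplx R)) : Prop :=
  exists f g : Cplx R -> Cplx R,
    holo_on f Y1 /\ holo_on g Y2 /\
    (forall z, Y1 z -> Y2 (f z) /\ g (f z) = z) /\
    (forall z, Y2 z -> Y1 (g z) /\ f (g z) = z).

(* Main.v *)
Require Import Defs.
From HB Require Import structures.
From mathcomp Require Import all_boot all_order all_algebra.
From mathcomp Require Import all_classical all_reals all_analysis.
From mathcomp Require Import complex.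
Import Order.TTheory GRing.Theory Num.Theory.
Import numFieldNormedType.Exports.
Local Open Scope classical_set_scope.
Local Open Scope ring_scope.

Section S.
Variable R : realType.
Local Open Scope complex_scope.
Implicit Types f g h : Cplx R -> Cplx R.

Lemma chain f g x : derivable f x 1 -> derivable g (f x) 1 ->
  derivable (g \o f) x 1 /\ 'D_1 (g \o f) x = 'D_1 g (f x) * 'D_1 f x.
Proof.
move=> /derivable1_diffP df /derivable1_diffP dg.
have dc := differentiable_comp df dg.
split; first exact/derivable1_diffP.
rewrite -!derive1E.
rewrite (derive1E' dc) (diff_comp df dg) (derive1E' df) (derive1E' dg) /=.
rewrite -[X in 'd  _ _ X = _]mulr1.
by rewrite [LHS]linearZ mulrC.
Qed.

Lemma normc_ge0 (z : R[i]) : 0 <= Normc.normc z.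
Proof. by case: z => a b; rewrite /= sqrtr_ge0. Qed.

Lemma normcE' (z : R[i]) : `|z| = (Normc.normc z)%:C.
Proof. by rewrite normc_def; case: z. Qed.

Lemma rot_der h (l : Cplx R) z : derivable h (l * z) 1 ->
  derivable (h \o (l \*: id)) z 1 /\ 'D_1 (h \o (l \*: id)) z = 'D_1 h (l * z) * l.
Proof.
move=> dh.
have dl : derivable (l \*: (@id (Cplx R))) z 1 by apply: derivableZ; apply: derivable_id.
have := @chain _ _ _ dl dh.
have -> : 'D_1 (l \*: (@id (Cplx R))) z = l.
  rewrite deriveZ; last exact: derivable_id.
  rewrite derive_id.
  exact: mulr1.
done.
Qed.


Arguments chain {f g x}.
Arguments rot_der {h l z}.

Lemma class_map Om Y1 Y2 f g w s h : holo_on f Y1 ->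
  (forall z, Y1 z -> Y2 (f z) /\ g (f z) = z) -> Om w -> Hclass Om Y1 w s h ->
  Hclass Om Y2 w (f s) (f \o h) /\ 'D_1 (f \o h) w = 'D_1 f s * 'D_1 h w.
Proof.
move=> hf fg Ow [[hh hY] [hw hne]].
have Ys : Y1 s by rewrite -hw; apply: hY.
split; last by rewrite -hw; exact: (chain (hh w Ow) (hf _ (hY w Ow))).2.
split; [split|split].
- move=> z Oz; exact: (chain (hh z Oz) (hf _ (hY z Oz))).1.
- move=> z Oz /=; exact: (fg _ (hY z Oz)).1.
- by rewrite /= hw.
- move=> z Oz zw /= e; apply: (hne z Oz zw).
  by rewrite -(fg _ (hY z Oz)).2 e (fg _ Ys).2.
Qed.

Arguments class_map {Om Y1 Y2 f g w s h}.

Definition Sset (Y : set (Cplx R)) (v : Cplx R) := [set x : R | 0 < x /\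
        exists h, Hclass (@unit_disc R) Y 0 v h /\ 'D_1 h 0 = (x%:C : Cplx R)].

Lemma rset Y1 Y2 f g v x : holo_on f Y1 ->
  (forall z, Y1 z -> Y2 (f z) /\ g (f z) = z) -> 'D_1 f v != 0 ->
  Sset Y1 v x -> Sset Y2 (f v) (Normc.normc ('D_1 f v) * x).
Proof.
move=> hf fg c0 [x0 [k [kC kd]]].
set c := 'D_1 f v.
have D0 : @unit_disc R 0 by rewrite /unit_disc /= normr0 ltr01.
have [kkC kkd] := class_map hf fg D0 kC.
set N := Normc.normc c.
have N0 : 0 < N.
  rewrite lt_def normc_ge0 andbT; apply/eqP => /Normc.eq0_normc /eqP.
  by rewrite (negbTE c0).
have NC0 : 0 < (N%:C : R[i]) by rewrite ltcR.
set l : Cplx R := N%:C / c.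
have l0 : l != 0 by rewrite mulf_neq0 ?invr_eq0 // (gt_eqF NC0).
have nl : `|l| = 1.
  rewrite normrM normrV ?unitfE // (ger0_norm (ltW NC0)).
  by rewrite normcE' -/N divff // (gt_eqF NC0).
have Dl : forall z, @unit_disc R z -> @unit_disc R (l * z).
  by move=> z; rewrite /unit_disc /= normrM nl mul1r.
split; first exact: mulr_gt0.
exists ((f \o k) \o (l \*: id)); split.
  split; [split|split].
  - move=> z Dz; exact: (rot_der (kkC.1.1 _ (Dl z Dz))).1.
  - move=> z Dz; exact: (kkC.1.2 _ (Dl z Dz)).
  - by rewrite /= scaler0; exact: kkC.2.1.
  - move=> z Dz z0; apply: (kkC.2.2 _ (Dl z Dz)).
    by apply/eqP; rewrite mulf_neq0 //; apply/eqP.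
have := @rot_der (f \o k) l 0; rewrite mulr0 => /(_ (kkC.1.1 0 D0)) [_ ->].
rewrite kkd kd /l rmorphM /=.
by rewrite -/c mulrC -mulrA mulKf.
Qed.


Arguments rset {Y1 Y2 f g v x}.

Lemma sup_scale (S : set R) c : 0 < c -> sup [set c * x | x in S] = c * sup S.
Proof.
move=> c0.
have [hs|nhs] := pselect (has_sup S).
  have hsT : has_sup [set c * x | x in S].
    split; first by case: hs.1 => x Sx; exists (c * x); exists x.
    exists (c * sup S) => _ [x Sx <-]; rewrite ler_pM2l //.
    exact: sup_upper_bound hs _ Sx.
  apply/eqP; rewrite eq_le; apply/andP; split.
    apply: ge_sup; first exact: hsT.1.
    move=> _ [x Sx <-]; rewrite ler_pM2l //; exact: sup_upper_bound hs _ Sx.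
  rewrite -ler_pdivlMl //; apply: ge_sup; first exact: hs.1.
  move=> x Sx; rewrite ler_pdivlMl //; apply: sup_upper_bound hsT _ _.
  by exists x.
rewrite (sup_out nhs) mulr0 sup_out // => hsT; apply: nhs; split.
  by case: hsT.1 => _ [x Sx _]; exists x.
case: hsT.2 => M hM; exists (c^-1 * M) => x Sx.
rewrite ler_pdivlMl //; apply: hM; by exists x.
Qed.

Lemma r_inv Y1 Y2 f g v : holo_on f Y1 -> holo_on g Y2 ->
  (forall z, Y1 z -> Y2 (f z) /\ g (f z) = z) ->
  (forall z, Y2 z -> Y1 (g z) /\ f (g z) = z) -> Y1 v ->
  'D_1 g (f v) * 'D_1 f v = 1 ->
  hurwitz_r Y2 (f v) = Normc.normc ('D_1 f v) * hurwitz_r Y1 v.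
Proof.
move=> hf hg fg gf Yv dc.
have c0 : 'D_1 f v != 0.
  by apply/eqP => e; move: dc; rewrite e mulr0 => /eqP; rewrite eq_sym oner_eq0.
have d0 : 'D_1 g (f v) != 0.
  by apply/eqP => e; move: dc; rewrite e mul0r => /eqP; rewrite eq_sym oner_eq0.
have Nm : Normc.normc ('D_1 g (f v)) * Normc.normc ('D_1 f v) = 1.
  by rewrite -Normc.normcM dc Normc.normc1.
have N0 : 0 < Normc.normc ('D_1 f v).
  rewrite lt_def normc_ge0 andbT; apply/eqP => /Normc.eq0_normc /eqP.
  by rewrite (negbTE c0).
rewrite /hurwitz_r -/(Sset Y2 (f v)) -/(Sset Y1 v) -sup_scale //.
congr sup; apply/seteqP; split.
  move=> y Sy; have := rset hg gf d0 Sy; rewrite (fg v Yv).2 => Sy'.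
  exists (Normc.normc ('D_1 g (f v)) * y) => //.
  by rewrite mulrA [_ * Normc.normc _]mulrC Nm mul1r.
by move=> _ [x Sx <-]; exact: rset hf fg c0 Sx.
Qed.

End S.
Arguments chain {R f g x}.
Arguments class_map {R Om Y1 Y2 f g w s h}.
Arguments r_inv {R Y1 Y2 f g v}.

Theorem corollary3p15 (R : realType) (Y1 Y2 Om : set (Cplx R)) :
  domain Y1 -> domain Y2 -> Y1 != setT -> Y2 != setT ->
  conf_equiv Y1 Y2 -> domain Om ->
  exists (a b : Cplx R), Y1 a /\ Y2 b /\
    (forall w, Om w -> cara_density Om Y1 a w = cara_density Om Y2 b w).
Proof.
move=> [Y1o [_ [a Ya]]] _ _ _ [f [g [hf [hg [fg gf]]]]] _.
exists a, (f a); split => //; split; first exact: (fg a Ya).1.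
move=> w Ow.
set b := f a.
have Yb : Y2 b := (fg a Ya).1.
have gb : g b = a := (fg a Ya).2.
have dc : 'D_1 g b * 'D_1 f a = 1.
  have [_ <-] := chain (hf a Ya) (hg _ Yb).
  rewrite (@near_eq_derive _ _ _ _ id) ?derive_id //.
  have : \forall z \near a, Y1 z by apply: open_nbhs_nbhs; split.
  by apply: filterS => z Yz; rewrite /= (fg z Yz).2.
have hr := r_inv hf hg fg gf Ya dc.
set Nc := Normc.normc ('D_1 f a).
set Nd := Normc.normc ('D_1 g b).
have Nm : Nd * Nc = 1 by rewrite -Normc.normcM dc Normc.normc1.
have Nc0 : Nc != 0 by apply/eqP => e; move: Nm; rewrite e mulr0 => /eqP; rewrite eq_sym oner_eq0.
have e2c : hurwitz_eta Y2 b * Nc = hurwitz_eta Y1 a.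
  by rewrite /hurwitz_eta hr invfM -/Nc [Nc^-1 * _]mulrC mulrA divfK.
have e1d : hurwitz_eta Y1 a * Nd = hurwitz_eta Y2 b.
  by rewrite -e2c -mulrA [Nc * Nd]mulrC Nm mulr1.
have ex12 : (exists h, Hclass Om Y1 w a h) = (exists h, Hclass Om Y2 w b h).
  apply: propext; split => [[h hC]|[k kC]].
    by exists (f \o h); exact: (class_map hf fg Ow hC).1.
  by exists (g \o k); rewrite -gb; exact: (class_map hg gf Ow kC).1.
rewrite /cara_density ex12; case: ifP => // _.
apply: f_equal; apply/seteqP; split => _ [h hC <-] /=.
  have [kC kd] := class_map hf fg Ow hC.
  apply: (ex_intro2 _ _ (f \o h) kC).
  change ((f \o h) w) with (f (h w)).
  rewrite kd (proj1 (proj2 hC)).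
  have nM : Normc.normc ('D_1 f a * 'D_1 h w) = Nc * Normc.normc ('D_1 h w)
    by apply: Normc.normcM.
  apply: f_equal; rewrite -e2c -mulrA -nM; reflexivity.
have [kC kd] := class_map hg gf Ow hC.
rewrite gb in kC.
apply: (ex_intro2 _ _ (g \o h) kC).
change ((g \o h) w) with (g (h w)).
rewrite kd (proj1 (proj2 hC)) gb.
have nM : Normc.normc ('D_1 g b * 'D_1 h w) = Nd * Normc.normc ('D_1 h w)
  by apply: Normc.normcM.
apply: f_equal; rewrite -e1d -mulrA -nM; reflexivity.
Qed.
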